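(* Let $V$ be a real Hilbert space with inner product $\langle\cdot,\cdot\rangle$, $Z=V\times\mathbb{R}\times\mathbb{R}$ with the product inner product, $D$ a linear operator on $V$, and $L$ a linear, self-adjoint, positive semidefinite operator on $V$. Let $E_{\mathrm{L}},E_{\mathrm{U}}$ be lower-bounded $C^1$ functionals on $V$ and $a_{\mathrm{X}}>-\inf_v E_{\mathrm{X}}(v)$ real constants ($\mathrm{X}=\mathrm{L},\mathrm{U}$). For $u\in V$ let $\phi_{\mathrm{X}}(u)=\nabla E_{\mathrm{X}}(u)/\big(2\sqrt{E_{\mathrm{X}}(u)+a_{\mathrm{X}}}\big)\in V$ (Fréchet derivative identified with an element of $V$), $\Phi_{\mathrm{X}}(u)(v)=\langle\phi_{\mathrm{X}}(u),v\rangle$, $\Phi_{\mathrm{X}}^*(u)(r)=r\phi_{\mathrm{X}}(u)$, and \[ \mathcal{L}(u)=\begin{bmatrix} I & 0 & 0\\ \Phi_{\mathrm{L}}(u) & 1 & 0\\ \Phi_{\mathrm{U}}(u) & 0 & 1\end{bmatrix} \begin{bmatrix} D & 0 & 0\\ 0&0&0\\0&0&0\end{bmatrix} \begin{bmatrix} I & \Phi_{\mathrm{L}}^*(u) & \Phi_{\mathrm{U}}^*(u)\\ 0&1&0\\0&0&1\end{bmatrix}. \] Define $\tilde E(u,r_{\mathrm{L}},r_{\mathrm{U}})=\frac12\langle u,Lu\rangle + r_{\mathrm{L}}^2-r_{\mathrm{U}}^2$, so $\nabla\tilde E(u,r_{\mathrm{L}},r_{\mathrm{U}})=[Lu,\,2r_{\mathrm{L}},\,-2r_{\mathrm{U}}]^T$.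 Let $\Delta t>0$, let $z^n=[u^n,r^n_{\mathrm{L}},r^n_{\mathrm{U}}]^T\in Z$, let $\bar u^{n+1/2}\in V$ be arbitrary, and suppose $z^{n+1}=[u^{n+1},r^{n+1}_{\mathrm{L}},r^{n+1}_{\mathrm{U}}]^T\in Z$ satisfies \[ \frac{z^{n+1}-z^n}{\Delta t}=\mathcal{L}(\bar u^{n+1/2})\,\nabla\tilde E(z^{n+1/2}),\qquad z^{n+1/2}=\tfrac12(z^{n+1}+z^n), \] with all terms well-defined. Let $\tilde E^k=\frac12\langle u^k,Lu^k\rangle+(r^k_{\mathrm{L}})^2-(r^k_{\mathrm{U}})^2$ for $k=n,n+1$. If $D$ is skew-symmetric, then $\tilde E^{n+1}=\tilde E^n$. If $D$ is negative semidefinite, then $\tilde E^{n+1}\le\tilde E^n$.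
   Context: $I$ is the identity on $V$. $D$ skew-symmetric means $\langle Dv,w\rangle=-\langle v,Dw\rangle$ on its domain; negative semidefinite means $\langle v,Dv\rangle\le0$. In the paper's Crank–Nicolson-type SAV scheme, $\bar u^{n+1/2}$ is chosen as a (locally) $O(\Delta t^2)$ approximation of the midpoint value, but the conclusion holds for any choice. *)

(* Defs.v *)
From HB Require Import structures.
From mathcomp Require Import all_boot all_order all_algebra.
From mathcomp Require Import all_classical all_reals all_analysis.
Set Implicit Arguments. Unset Strict Implicit. Unset Printing Implicit Defensive.
Import Order.TTheory GRing.Theory Num.Theory.
Import numFieldNormedType.Exports.
Local Open Scope ring_scope.
Local Open Scope classical_set_scope.

Definition is_inner_product (R : realType) (V : normedModType R)
  (ip : V -> V -> R) : Prop :=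
  [/\ forall u v, ip u v = ip v u,
      forall (a : R) u v w, ip (a *: u + v) w = a * ip u w + ip v w
    & forall v, `|v| = Num.sqrt (ip v v)].

Definition C1_with_gradient (R : realType) (V : normedModType R)
  (ip : V -> V -> R) (E : V -> R) (gradE : V -> V) : Prop :=
  [/\ forall u, differentiable E u,
      forall u v, 'd E u v = ip (gradE u) v
    & continuous gradE].

Definition phi (R : realType) (V : lmodType R) (E : V -> R) (gradE : V -> V)
  (a : R) (u : V) : V :=
  (2 * Num.sqrt (E u + a))^-1 *: gradE u.

(* Elements of Z = V x R x R are triples ((u, rL), rU). *)
Definition Lright (R : realType) (V : lmodType R) (pL pU : V)
  (z : V * R * R) : V * R * R :=
  (z.1.1 + z.1.2 *: pL + z.2 *: pU, z.1.2, z.2).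
Definition Lmid (R : realType) (V : lmodType R) (D : V -> V)
  (z : V * R * R) : V * R * R := (D z.1.1, 0, 0).
Definition Lleft (R : realType) (V : lmodType R) (ip : V -> V -> R)
  (pL pU : V) (z : V * R * R) : V * R * R :=
  (z.1.1, ip pL z.1.1 + z.1.2, ip pU z.1.1 + z.2).

Definition Lop (R : realType) (V : lmodType R) (ip : V -> V -> R)
  (D : V -> V) (pL pU : V) (z : V * R * R) : V * R * R :=
  Lleft ip pL pU (Lmid D (Lright pL pU z)).

Definition gradEt (R : realType) (V : lmodType R) (L : V -> V)
  (z : V * R * R) : V * R * R := (L z.1.1, 2 * z.1.2, - 2 * z.2).

Definition Et (R : realType) (V : lmodType R) (ip : V -> V -> R)
  (L : V -> V) (z : V * R * R) : R :=
  2^-1 * ip z.1.1 (L z.1.1) + z.1.2 ^+ 2 - z.2 ^+ 2.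

Definition zadd (R : realType) (V : lmodType R) (z w : V * R * R) : V * R * R :=
  (z.1.1 + w.1.1, z.1.2 + w.1.2, z.2 + w.2).
Definition zscale (R : realType) (V : lmodType R) (c : R) (z : V * R * R)
  : V * R * R := (c *: z.1.1, c * z.1.2, c * z.2).
Definition zsub (R : realType) (V : lmodType R) (z w : V * R * R) : V * R * R :=
  zadd z (zscale (-1) w).

(* Main.v *)
Require Import Defs.
From HB Require Import structures.
From mathcomp Require Import all_boot all_order all_algebra.
From mathcomp Require Import all_classical all_reals all_analysis.
From mathcomp Require Import ring lra.
Import Order.TTheory GRing.Theory Num.Theory.
Import numFieldNormedType.Exports.
Local Open Scope ring_scope.
Local Open Scope classical_set_scope.

Theorem lemma3p1 (R : realType) (V : completeNormedModType R)
  (ip : V -> V -> R) (D L : {linear V -> V})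
  (EL EU : V -> R) (gradEL gradEU : V -> V) (aL aU : R)
  (dt : R) (zn zn1 : V * R * R) (ubar : V) :
  is_inner_product ip ->
  (forall u v, ip (L u) v = ip u (L v)) ->
  (forall u, 0 <= ip u (L u)) ->
  C1_with_gradient ip EL gradEL ->
  C1_with_gradient ip EU gradEU ->
  (exists m : R, forall v, m <= EL v) ->
  (exists m : R, forall v, m <= EU v) ->
  - inf (range EL) < aL ->
  - inf (range EU) < aU ->
  0 < dt ->
  zscale dt^-1 (zsub zn1 zn) =
    Lop ip D (phi EL gradEL aL ubar) (phi EU gradEU aU ubar)
      (gradEt L (zscale 2^-1 (zadd zn1 zn))) ->
  ((forall v w, ip (D v) w = - ip v (D w)) -> Et ip L zn1 = Et ip L zn) /\
  ((forall v, ip v (D v) <= 0) -> Et ip L zn1 <= Et ip L zn).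
Proof.
move=> [ipC ipL _] Lsym _ _ _ _ _ _ _ dt0.
set pL := phi EL gradEL aL ubar; set pU := phi EU gradEU aU ubar.
case: zn => [[u0 a0] b0]; case: zn1 => [[u1 a1] b1].
rewrite /zscale /zsub /zadd /Lop /Lleft /Lmid /Lright /gradEt /zscale /=.
move=> [e1 e2 e3].
have ip0 : forall w, ip 0 w = 0.
  move=> w; have := ipL 1 0 0 w; rewrite scale1r addr0 mul1r => h.
  by have := congr1 (fun x => x - ip 0 w) h; rewrite /= subrr addrK => ->.
have ipD : forall u v w, ip (u + v) w = ip u w + ip v w.
  by move=> u v w; have := ipL 1 u v w; rewrite scale1r mul1r.
have ipZ : forall a u w, ip (a *: u) w = a * ip u w.
  by move=> a u w; have := ipL a u 0 w; rewrite addr0 ip0 addr0.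
have ipDr : forall u v w, ip w (u + v) = ip w u + ip w v.
  by move=> u v w; rewrite ipC ipD !(ipC w).
have ipZr : forall a u w, ip w (a *: u) = a * ip w u.
  by move=> a u w; rewrite ipC ipZ (ipC w).
set w := (L (2^-1 *: (u1 + u0)) + 2 * (2^-1 * (a1 + a0)) *: pL +
                 - 2 * (2^-1 * (b1 + b0)) *: pU) in e1 e2 e3.
have dtn : dt != 0 by rewrite gt_eqF.
have hu : u1 = u0 + dt *: D w.
  by rewrite -e1 scalerA mulfV // scale1r scaleN1r addrC subrK.
have ha : a1 = a0 + dt * ip pL (D w).
  by rewrite addr0 in e2; rewrite -e2 mulrA mulfV // mul1r mulN1r addrC subrK.
have hb : b1 = b0 + dt * ip pU (D w).
  by rewrite addr0 in e3; rewrite -e3 mulrA mulfV // mul1r mulN1r addrC subrK.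
have key : Et ip L (u1, a1, b1) - Et ip L (u0, a0, b0) = dt * ip (D w) w.
  set g := L (2^-1 *: (u1 + u0)).
  have du : u1 - u0 = dt *: D w by rewrite hu addrAC subrr add0r.
  have cross : ip u1 (L u0) = ip u0 (L u1) by rewrite ipC Lsym.
  have eA : ip (u1 - u0) g = 2^-1 * (ip u1 (L u1) - ip u0 (L u0)).
    rewrite /g linearZ linearD /= ipZr !ipD !ipDr cross.
    have ipN : forall u v, ip (- u) v = - ip u v.
      by move=> u v; rewrite -scaleN1r ipZ mulN1r.
    rewrite !ipN; ring.
  rewrite du ipZ in eA.
  have q : ip u1 (L u1) = ip u0 (L u0) + 2 * dt * ip (D w) g.
    by rewrite -mulrA eA; field.
  have eW : ip (D w) w = ip (D w) g + 2 * (2^-1 * (a1 + a0)) * ip pL (D w)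
      + - 2 * (2^-1 * (b1 + b0)) * ip pU (D w).
    by rewrite (ipC pL) (ipC pU) {2}/w !ipDr !ipZr.
  by rewrite eW /Et /= q ha hb; field.
split.
  move=> skew; apply/eqP; rewrite -subr_eq0 key.
  have : ip (D w) w = 0.
    have := skew w w; rewrite (ipC w) => h.
    have : 2 * ip (D w) w = 0 by rewrite mulr2n mulrDl mul1r {2}h subrr.
    by move/eqP; rewrite mulf_eq0 pnatr_eq0 /= => /eqP.
  by move=> ->; rewrite mulr0.
move=> nsd; rewrite -subr_le0 key; apply: mulr_ge0_le0; first exact: ltW.
by rewrite ipC.
Qed.
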